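(* Let $\mathbf G$ be a finite unitary group acting on a finite-dimensional complex inner product space $V$, $\mathbf x_0\in V$ a unit vector with $\mathbf G\mathbf x_0\neq\{\mathbf x_0\}$, and $X$ a generating set of $\mathbf G$ such that condition $(\ddagger)$ holds. Let $\delta$ be as defined in the context and let $S=\operatorname{Stab}_{\mathbf G}(\mathbf x_0)$. If $g\in\mathbf G$ and $\mathbf r\in V$ satisfy $\|\mathbf r-g^{-1}\mathbf x_0\|<\delta/3$, then either version (A) or (B) of the primitive decoding algorithm applied to $\mathbf r$ terminates in at most $\lfloor 6/\delta\rfloor$ steps and outputs $c_k\cdots c_1\in Sg$.
   Context: Condition $(\ddagger)$: for every $\mathbf w\in\mathbf G\mathbf x_0$ with $\mathbf w\neq\mathbf x_0$ there is $c\in X$ with $\|c\mathbf w-\mathbf x_0\|<\|\mathbf w-\mathbf x_0\|$. For a codeword $\mathbf w\in\mathbf G\mathbf x_0$, $\operatorname{MG}(\mathbf w)=\{c\in X\cup\{I\}:\|c\mathbf w-\mathbf x_0\|\le\|d\mathbf w-\mathbf x_0\|\text{ for all }d\in X\cup\{I\}\}$, and $\delta=\min\{\|\mathbf w-\mathbf x_0\|-\|c\mathbf w-\mathbf x_0\|:\mathbf w\in\mathbf G\mathbf x_0\setminus\{\mathbf x_0\},\ c\in\operatorname{MG}(\mathbf w)\}$. Primitive decoding algorithm: set $\mathbf r_0=\mathbf r$; given $\mathbf r_k$, if there is no $c\in X$ with $\|c\mathbf r_k-\mathbf x_0\|<\|\mathbf r_k-\mathbf x_0\|-\delta/3$, terminate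 and output $c_k\cdots c_1$; otherwise choose $c_{k+1}$ and set $\mathbf r_{k+1}=c_{k+1}\mathbf r_k$, where in version (A) $c_{k+1}\in X$ minimizes $\|c_{k+1}\mathbf r_k-\mathbf x_0\|$, and in version (B) $c_{k+1}$ is the first element of $X$ (in a fixed ordering) with $\|c_{k+1}\mathbf r_k-\mathbf x_0\|<\|\mathbf r_k-\mathbf x_0\|-\delta/3$. *)

(* Defs.v *)
From HB Require Import structures.
From mathcomp Require Import all_boot all_order all_fingroup all_algebra.
From mathcomp Require Import mxrepresentation.
Set Implicit Arguments. Unset Strict Implicit. Unset Printing Implicit Defensive.
Import Order.TTheory GRing.Theory Num.Theory.
Local Open Scope ring_scope.

Section Decoding.
Variables (C : numClosedFieldType) (gT : finGroupType) (G : {group gT}) (n : nat).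
Variable rG : mx_representation C G n.

Definition vnorm (v : 'cV[C]_n) : C := sqrtC (\sum_(i < n) `|v i 0| ^+ 2).

Definition unitary_mx (A : 'M[C]_n) : Prop := (map_mx Num.conj A)^T *m A = 1%:M.

Variables (X : {set gT}) (x0 : 'cV[C]_n).

Definition in_orbit (w : 'cV[C]_n) : Prop := exists2 g, g \in G & w = rG g *m x0.

Definition cond_ddagger : Prop :=
  forall w, in_orbit w -> w <> x0 ->
    exists2 c, c \in X & vnorm (rG c *m w - x0) < vnorm (w - x0).

Definition in_MG (w : 'cV[C]_n) (c : gT) : Prop :=
  c \in X :|: [set 1%g] /\
  forall d, d \in X :|: [set 1%g] -> vnorm (rG c *m w - x0) <= vnorm (rG d *m w - x0).

Definition is_delta (delta : C) : Prop :=
  (exists w c, [/\ in_orbit w, w <> x0, in_MG w c &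
                   delta = vnorm (w - x0) - vnorm (rG c *m w - x0)]) /\
  (forall w c, in_orbit w -> w <> x0 -> in_MG w c ->
                   delta <= vnorm (w - x0) - vnorm (rG c *m w - x0)).

Variable delta : C.

Definition improves (v : 'cV[C]_n) (c : gT) : Prop :=
  vnorm (rG c *m v - x0) < vnorm (v - x0) - delta / 3%:R.
Definition continues (v : 'cV[C]_n) : Prop := exists2 c, c \in X & improves v c.
Definition terminates (v : 'cV[C]_n) : Prop := ~ continues v.

Definition stepA (v : 'cV[C]_n) (c : gT) : Prop :=
  [/\ continues v, c \in X &
      forall d, d \in X -> vnorm (rG c *m v - x0) <= vnorm (rG d *m v - x0)].

Definition stepB (ord : seq gT) (v : 'cV[C]_n) (c : gT) : Prop :=
  [/\ continues v, c \in X, improves v c &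
      forall d, d \in X -> (index d ord < index c ord)%N -> ~ improves v d].

Fixpoint valid_run (step : 'cV[C]_n -> gT -> Prop) (v : 'cV[C]_n) (cs : seq gT) : Prop :=
  match cs with
  | [::] => True
  | c :: cs' => step v c /\ valid_run step (rG c *m v) cs'
  end.

Definition run_vec (r : 'cV[C]_n) (cs : seq gT) : 'cV[C]_n :=
  foldl (fun v c => rG c *m v) r cs.

End Decoding.

Definition run_output (gT : finGroupType) (cs : seq gT) : gT :=
  foldl (fun h c => (c * h)%g) 1%g cs.

Definition stab (C : numClosedFieldType) (gT : finGroupType) (G : {group gT}) (n : nat)
  (rG : mx_representation C G n) (x0 : 'cV[C]_n) : {set gT} :=
  [set h in G | rG h *m x0 == x0].

(* Main.v *)
Require Import Defs.
From HB Require Import structures.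
From mathcomp Require Import all_boot all_order all_fingroup all_algebra.
From mathcomp Require Import mxrepresentation sesquilinear spectral.
From mathcomp Require Import ring.
Set Implicit Arguments. Unset Strict Implicit. Unset Printing Implicit Defensive.
Import Order.TTheory GRing.Theory Num.Theory.
Local Open Scope ring_scope.

Section VN.
Variables (C : numClosedFieldType) (n : nat).

Lemma vnormE (v : 'cV[C]_n) : vnorm v = sqrtC (dotmx v^T v^T).
Proof.
rewrite /vnorm dotmxE !mxE; congr sqrtC; apply: eq_bigr => i _.
by rewrite !mxE normCK.
Qed.

Lemma vnorm_ge0 (v : 'cV[C]_n) : 0 <= vnorm v.
Proof. by rewrite sqrtC_ge0 sumr_ge0 // => i _; rewrite exprn_ge0. Qed.

Lemma vnormD (u v : 'cV[C]_n) : vnorm (u + v) <= vnorm u + vnorm v.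
Proof.
rewrite !vnormE linearD /=.
have := triangle_lerif (@dotmx C n) u^T v^T.
by case.
Qed.

Lemma vnormN (v : 'cV[C]_n) : vnorm (- v) = vnorm v.
Proof. by rewrite /vnorm; congr sqrtC; apply: eq_bigr => i _; rewrite !mxE normrN. Qed.

Lemma vtri (a b c : 'cV[C]_n) : vnorm (a - b) <= vnorm (a - c) + vnorm (c - b).
Proof. by have := vnormD (a - c) (c - b); rewrite addrA subrK. Qed.

Lemma vnormU (A : 'M[C]_n) (v : 'cV[C]_n) : unitary_mx A -> vnorm (A *m v) = vnorm v.
Proof.
move=> HA; have UA : A^T \is unitarymx.
  apply/unitarymxP; rewrite trmxK.
  have -> : map_mx Num.conj A = (map_mx Num.conj A)^T^T by rewrite trmxK.
  by rewrite -trmx_mul HA trmx1.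
rewrite !vnormE trmx_mul !dotmxE; congr (sqrtC (_ 0 0)).
rewrite [X in _ *m X](_ : _ = map_mx Num.conj A^T^T *m map_mx Num.conj v^T^T) ?mulmxA ?mulmxtVK //.
by rewrite trmx_mul map_mxM.
Qed.
End VN.

Lemma seq_min (C : numClosedFieldType) (T : eqType) (f : T -> C) (s : seq T) :
  s != [::] -> (forall x, 0 <= f x) ->
  exists2 c, c \in s & forall d, d \in s -> f c <= f d.
Proof.
move=> + f0; elim: s => [//|a s IH] _.
case: s IH => [|b s] IH.
  by exists a; rewrite ?inE // => d; rewrite inE => /eqP->.
have [c cs Hc] := IH isT.
have /orP[le|le] := real_leVge (ger0_real (f0 a)) (ger0_real (f0 c)).
  exists a; first by rewrite inE eqxx.
  move=> d; rewrite inE => /orP[/eqP->//|ds].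
  exact: le_trans le (Hc d ds).
exists c; first by rewrite inE cs orbT.
by move=> d; rewrite inE => /orP[/eqP->//|ds]; apply: Hc.
Qed.

Lemma fold_out (gT : finGroupType) (cs : seq gT) (a : gT) :
  foldl (fun h c => (c * h)%g) a cs = (run_output cs * a)%g.
Proof.
rewrite /run_output; elim: cs a => [|c cs IH] a /=; first by rewrite mul1g.
by rewrite IH (IH (c * 1)%g) mulg1 mulgA.
Qed.

Section Main.
Variables (C : numClosedFieldType) (gT : finGroupType) (G : {group gT})
  (n : nat) (rG : mx_representation C G n)
  (Hunitary : forall h, h \in G -> unitary_mx (rG h))
  (x0 : 'cV[C]_n) (X : {set gT}) (HXG : X \subset G)
  (Hdd : cond_ddagger rG X x0)
  (delta : C) (Hdelta : is_delta rG X x0 delta).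

Local Notation N := (@vnorm C n).
Local Notation t := (delta / 3%:R).

Lemma dE : delta = t + (t + t).
Proof. by field. Qed.

Lemma rGU h (v : 'cV[C]_n) : h \in G -> N (rG h *m v) = N v.
Proof. by move=> hG; apply: vnormU; apply: Hunitary. Qed.

Lemma XG c : c \in X -> c \in G.
Proof. by move=> cX; apply: (subsetP HXG). Qed.

Lemma MG_exists (w : 'cV[C]_n) : exists c, in_MG rG X x0 w c.
Proof.
have H1 : (1%g : gT) \in enum (X :|: [set 1%g]) by rewrite mem_enum !inE eqxx orbT.
have ne : enum (X :|: [set 1%g]) != [::] by case: (enum _) H1.
have [c cs Hc] := @seq_min _ _ (fun d : gT => N (rG d *m w - x0)) _ ne (fun _ => vnorm_ge0 _).
exists c; split; first by rewrite -mem_enum.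
by move=> d dS; apply: Hc; rewrite mem_enum.
Qed.

Lemma delta_le (w : 'cV[C]_n) : Defs.in_orbit rG x0 w -> w <> x0 -> delta <= N (w - x0).
Proof.
move=> ow nw; have [c Hc] := MG_exists w.
apply: le_trans (Hdelta.2 w c ow nw Hc) _.
by rewrite lerBlDr lerDl vnorm_ge0.
Qed.

Lemma delta_gt0 : 0 < delta.
Proof.
have [w [c [ow nw [cS Hc] ->]]] := Hdelta.1.
have [c' c'X lt] := Hdd ow nw.
rewrite subr_gt0; apply: le_lt_trans (Hc c' _) lt.
by rewrite inE c'X.
Qed.

Lemma t_gt0 : 0 < t.
Proof. by rewrite divr_gt0 ?delta_gt0 ?ltr0n. Qed.

Lemma twot (v : 'cV[C]_n) h : h \in G -> N (v - rG h *m x0) < t ->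
  continues rG X x0 delta v -> t + t < N (v - x0).
Proof.
move=> hG Hv [c cX Himp]; rewrite /improves in Himp.
case: (eqVneq (rG h *m x0) x0) => [E|nE].
  rewrite E in Hv.
  have : N (v - x0) - t < 0 by rewrite subr_lt0.
  move=> /(lt_trans Himp) H; by have := le_lt_trans (vnorm_ge0 _) H; rewrite ltxx.
have ow : Defs.in_orbit rG x0 (rG h *m x0) by exists h.
have dl := delta_le ow (elimN eqP nE).
have Hv' : N (rG h *m x0 - v) < t by rewrite -opprB vnormN.
have := le_lt_trans dl (le_lt_trans (vtri _ _ v) (ltr_leD Hv' (lexx (N (v - x0))))).
by rewrite {1}dE ltrD2l.
Qed.


Variable step : 'cV[C]_n -> gT -> Prop.
Hypothesis Hstep : forall v c, step v c -> c \in X /\ improves rG x0 delta v c.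

Lemma run_track cs : forall v h, valid_run rG step v cs -> h \in G ->
  N (v - rG h *m x0) < t ->
  foldl (fun h c => (c * h)%g) h cs \in G /\
  N (run_vec rG v cs - rG (foldl (fun h c => (c * h)%g) h cs) *m x0) < t.
Proof.
elim: cs => [|c cs IH] v h /=; first by [].
move=> [st vr] hG Hv; have [cX _] := Hstep st.
have cG := XG cX.
apply: (IH _ _ vr); first by rewrite groupM.
by rewrite repr_mxM // -mulmxA -mulmxBr rGU.
Qed.

Lemma run_count cs : forall v h, valid_run rG step v cs -> h \in G ->
  N (v - rG h *m x0) < t ->
  cs = [::] \/ (size cs)%:R * t + t <= N (v - x0).
Proof.
elim: cs => [|c cs IH] v h /=; first by left.
move=> [st vr] hG Hv; right; have [cX Himp] := Hstep st.
have cG := XG cX.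
have tw := twot hG Hv (ex_intro2 _ _ c cX Himp).
rewrite /improves ltrBrDr in Himp.
have Hv' : N (rG c *m v - rG (c * h)%g *m x0) < t.
  by rewrite repr_mxM // -mulmxA -mulmxBr rGU.
case: (IH _ _ vr (groupM cG hG) Hv') => [->|le].
  by rewrite mul1r ltW.
rewrite -natr1 mulrDl mul1r; apply: ltW; apply: le_lt_trans Himp.
by rewrite lerD2r.
Qed.

Lemma stays (v : 'cV[C]_n) h : h \in G -> N (v - rG h *m x0) < t ->
  terminates rG X x0 delta v -> rG h *m x0 = x0.
Proof.
move=> hG Hv nc; case: (eqVneq (rG h *m x0) x0) => [//|nE].
set w := rG h *m x0 in Hv nE *.
have ow : Defs.in_orbit rG x0 w by exists h.
have nw := elimN eqP nE.
have [c cX ltc] := Hdd ow nw.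
have [cs [csS Hcs]] := MG_exists w.
have lec : N (rG cs *m w - x0) <= N (rG c *m w - x0) by apply: Hcs; rewrite inE cX.
have csX : cs \in X.
  move: csS; rewrite inE => /orP[//|]; rewrite inE => /eqP E.
  move: (le_lt_trans lec ltc); rewrite E repr_mx1 mul1mx ltxx //.
have dl := Hdelta.2 w cs ow nw (conj csS Hcs).
rewrite lerBrDr addrC -lerBrDr in dl.
have csG := XG csX.
have A : N (rG cs *m v - rG cs *m w) < t by rewrite -mulmxBr rGU.
have Cc : N (w - x0) < t + N (v - x0).
  apply: le_lt_trans (vtri _ _ v) _; rewrite ltrD2r -opprB vnormN //.
case: nc; exists cs => //; rewrite /improves.
apply: le_lt_trans (vtri _ _ (rG cs *m w)) _.
have -> : N (v - x0) - t = t + ((t + N (v - x0)) - delta) by field.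
apply: ltr_leD A _; apply: le_trans dl _.
by rewrite lerD2r ltW.
Qed.

Lemma generic (Hx0 : vnorm x0 = 1) g (Hg : g \in G) r
  (Hr : N (r - rG g^-1%g *m x0) < t) cs :
  valid_run rG step r cs ->
  (size cs)%:R <= 6%:R / delta /\
  (terminates rG X x0 delta (run_vec rG r cs) ->
        run_output cs \in (stab rG x0 :* g)%g).
Proof.
move=> vr; have giG : (g^-1)%g \in G by rewrite groupV.
split.
  case: (run_count vr giG Hr) => [->|le].
    by rewrite /= divr_ge0 ?ler0n ?ltW ?delta_gt0.
  have b : N (r - x0) < t + 2%:R.
    apply: le_lt_trans (vtri _ _ (rG g^-1%g *m x0)) _; apply: ltr_leD Hr _.
    apply: le_trans (vtri _ _ 0) _.
    by rewrite subr0 sub0r vnormN rGU // Hx0 -natr1.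
  have k2 : (size cs)%:R * t < 2%:R.
    by move: (le_lt_trans le b); rewrite addrC ltrD2l.
  rewrite ler_pdivlMr ?delta_gt0 //.
  have -> : (size cs)%:R * delta = 3%:R * ((size cs)%:R * t) by field.
  have -> : (6%:R : C) = 3%:R * 2%:R by rewrite -natrM.
  by rewrite ltW // ltr_pM2l ?ltr0n.
move=> term; have [hG Hk] := run_track vr giG Hr.
have E := stays hG Hk term.
rewrite fold_out in hG E.
by rewrite mem_rcoset inE hG E eqxx.
Qed.

End Main.

Theorem mainTheorem10 (C : numClosedFieldType) (gT : finGroupType) (G : {group gT})
  (n : nat) (rG : mx_representation C G n)
  (Hfaithful : mx_faithful rG)
  (Hunitary : forall h, h \in G -> unitary_mx (rG h))
  (x0 : 'cV[C]_n) (Hx0 : vnorm x0 = 1)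
  (Horbit : exists2 h, h \in G & rG h *m x0 != x0)
  (X : {set gT}) (HXG : X \subset G) (HXgen : <<X>>%g = G)
  (Hdd : cond_ddagger rG X x0)
  (delta : C) (Hdelta : is_delta rG X x0 delta)
  (g : gT) (Hg : g \in G) (r : 'cV[C]_n)
  (Hr : vnorm (r - rG g^-1%g *m x0) < delta / 3%:R) :
  (forall cs : seq gT, valid_run rG (stepA rG X x0 delta) r cs ->
     (size cs)%:R <= 6%:R / delta /\
     (terminates rG X x0 delta (run_vec rG r cs) ->
        run_output cs \in (stab rG x0 :* g)%g)) /\
  (forall ord : seq gT, uniq ord -> (forall c, (c \in ord) = (c \in X)) ->
   forall cs : seq gT, valid_run rG (stepB rG X x0 delta ord) r cs ->
     (size cs)%:R <= 6%:R / delta /\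
     (terminates rG X x0 delta (run_vec rG r cs) ->
        run_output cs \in (stab rG x0 :* g)%g)).
Proof.
split.
  move=> cs; apply: (generic Hunitary HXG Hdd Hdelta _ Hx0 Hg Hr).
  move=> v c [[c' c'X imp] cX Hmin]; split => //.
  exact: le_lt_trans (Hmin c' c'X) imp.
move=> ord _ _ cs; apply: (generic Hunitary HXG Hdd Hdelta _ Hx0 Hg Hr).
by move=> v c [_ cX imp _].
Qed.
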